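(* Let $\bm A=(A_1,\dots,A_d)$ be Hermitian matrices in $M_n(\mathbb{C})$, $B\in M_n(\mathbb{C})$, and $(\bm\lambda,\nu)\in\mathbb{R}^d\times\mathbb{C}$. Suppose there is a unit vector $\bm\psi\in\mathbb{C}^n$ with $$2\sum_{i=1}^d\|A_i\bm\psi-\lambda_i\bm\psi\|^2+\|B\bm\psi-\nu\bm\psi\|^2+\|B^\dagger\bm\psi-\overline{\nu}\bm\psi\|^2\le\epsilon_1$$ and that $\sum_{i\neq k}\|[A_i,A_k]\|+\|F_{(\bm\lambda,\nu)}(\bm A,B)\|\le\epsilon_2$, for some $\epsilon_1,\epsilon_2\ge0$. Then $(\bm\lambda,\nu)\in\dot\Lambda^{C}_{\epsilon}(\bm A,B)$ with $\epsilon=\sqrt{\tfrac{1}{\sqrt2}\epsilon_1+\epsilon_2}$.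
   Context: Let $n,d,m$ be positive integers. Fix Hermitian matrices $\Gamma_1,\dots,\Gamma_d\in M_{2m}(\mathbb{C})$ with $\Gamma_i^2=I_{2m}$ and $\Gamma_i\Gamma_j=-\Gamma_j\Gamma_i$ for $i\neq j$ (a Clifford representation; the paper uses a specific one built from Pauli matrices). Write $P=\begin{bmatrix} I_m&0\\0&0_m\end{bmatrix}$ and $Q=\begin{bmatrix}0_m&0\\0&I_m\end{bmatrix}$ in $M_{2m}(\mathbb{C})$. For a $d$-tuple $\bm A=(A_1,\dots,A_d)$ of Hermitian matrices in $M_n(\mathbb{C})$, a matrix $B\in M_n(\mathbb{C})$ (not necessarily Hermitian or normal), and a probe site $(\bm\lambda,\nu)\in\mathbb{R}^d\times\mathbb{C}$, the non-Hermitian spectral localizer is $$L_{(\bm\lambda,\nu)}(\bm A,B)=\sum_{i=1}^d (A_i-\lambda_i I)\otimes\Gamma_i+(B-\nu I)\otimes P-(B-\nu I)^\dagger\otimes Q\in M_{2mn}(\mathbb{C}).$$ The Clifford radial gap is $\dot\mu^{C}_{(\bm\lambda,\nu)}(\bm A,B)=\sigma_{\min}\big(L_{(\bm\lambda,\nu)}(\bm A,B)\big)$, and the Clifford radial $\epsilon$-pseudospectrum is $\dot\Lambda^{C}_\epsilon(\bm A,B)=\{(\bm\lambda,\nu)\in\mathbb{R}^d\times\mathbb{C}:\dot\mu^{C}_{(\bm\lambda,\nu)}(\bm A,B)\le\epsilon\}$. Define $$F_{(\bm\lambda,\nu)}(\bm A,B)=\sum_{i=1}^d\big(G_i+G_i^\dagger\big)-\sum_{i=1}^d\big(H_i+H_i^\dagger\big),\quad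 G_i=(A_i-\lambda_i I)(B-\nu I)\otimes\Gamma_iP,\quad H_i=(A_i-\lambda_i I)(B-\nu I)^\dagger\otimes\Gamma_iQ.$$ All matrix norms are operator norms; vector norms are Euclidean. *)

(* Defs.v *)
From HB Require Import structures.
From mathcomp Require Import all_boot all_order all_algebra.
From mathcomp Require Import complex mxtens.
From mathcomp Require Import classical_sets reals.
Set Implicit Arguments.
Unset Strict Implicit.
Unset Printing Implicit Defensive.
Import Order.TTheory GRing.Theory Num.Theory.
Local Open Scope ring_scope.
Local Open Scope classical_set_scope.

Section Defs.
Variable R : realType.
Local Notation C := (R[i]).

Definition vnorm (p : nat) (v : 'cV[C]_p) : R :=
  Num.sqrt (\sum_(k < p) (complex.Re (v k 0) ^+ 2 + complex.Im (v k 0) ^+ 2)).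

Definition adjmx (p q : nat) (M : 'M[C]_(p, q)) : 'M[C]_(q, p) :=
  (map_mx (@conjc R) M)^T.

Definition is_hermitian (p : nat) (M : 'M[C]_p) : Prop := adjmx M = M.

Definition opnorm (p q : nat) (M : 'M[C]_(p, q)) : R :=
  sup [set r : R | exists v : 'cV[C]_q, vnorm v = 1 /\ r = vnorm (M *m v)].

Definition sigma_min (p : nat) (M : 'M[C]_p) : R :=
  inf [set r : R | exists v : 'cV[C]_p, vnorm v = 1 /\ r = vnorm (M *m v)].

Definition RtoC (x : R) : C := Complex x 0.

Definition Pproj (m : nat) : 'M[C]_(m + m) := block_mx 1%:M 0 0 0.
Definition Qproj (m : nat) : 'M[C]_(m + m) := block_mx 0 0 0 1%:M.

Definition clifford_rep (d m : nat) (G : 'I_d -> 'M[C]_(m + m)) : Prop :=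
  (forall i, is_hermitian (G i)) /\
  (forall i, G i *m G i = 1%:M) /\
  (forall i j, i != j -> G i *m G j = - (G j *m G i)).

Definition localizer (n d m : nat) (G : 'I_d -> 'M[C]_(m + m))
  (A : 'I_d -> 'M[C]_n) (B : 'M[C]_n) (lam : 'I_d -> R) (nu : C)
  : 'M[C]_(n * (m + m)) :=
  \sum_(i < d) tensmx (A i - (RtoC (lam i))%:M) (G i)
  + tensmx (B - nu%:M) (Pproj m)
  - tensmx (adjmx (B - nu%:M)) (Qproj m).

Definition clifford_gap (n d m : nat) (G : 'I_d -> 'M[C]_(m + m))
  (A : 'I_d -> 'M[C]_n) (B : 'M[C]_n) (lam : 'I_d -> R) (nu : C) : R :=
  sigma_min (localizer G A B lam nu).

Definition clifford_pseudospectrum (n d m : nat) (G : 'I_d -> 'M[C]_(m + m))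
  (A : 'I_d -> 'M[C]_n) (B : 'M[C]_n) (eps : R) : set ((('I_d -> R) * C)%type) :=
  [set site | clifford_gap G A B site.1 site.2 <= eps].

Definition Fmx (n d m : nat) (G : 'I_d -> 'M[C]_(m + m))
  (A : 'I_d -> 'M[C]_n) (B : 'M[C]_n) (lam : 'I_d -> R) (nu : C)
  : 'M[C]_(n * (m + m)) :=
  let X := B - nu%:M in
  let Gi i := tensmx ((A i - (RtoC (lam i))%:M) *m X) (G i *m Pproj m) in
  let Hi i := tensmx ((A i - (RtoC (lam i))%:M) *m adjmx X) (G i *m Qproj m) in
  \sum_(i < d) (Gi i + adjmx (Gi i)) - \sum_(i < d) (Hi i + adjmx (Hi i)).

End Defs.

(* Main.v *)
Require Import Defs.
From HB Require Import structures.
From mathcomp Require Import all_boot all_order all_algebra.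
From mathcomp Require Import complex mxtens.
From mathcomp Require Import classical_sets reals.
Import Order.TTheory GRing.Theory Num.Theory.
Local Open Scope ring_scope.

From mathcomp Require Import ring lra.
Set Implicit Arguments. Unset Strict Implicit.


Section S.
Variable R : realType.
Local Notation C := (R[i]).

Definition nsq (p : nat) (v : 'cV[C]_p) : R :=
  \sum_(k < p) (complex.Re (v k 0) ^+ 2 + complex.Im (v k 0) ^+ 2).

Definition dot (p : nat) (u w : 'cV[C]_p) : C := (adjmx u *m w) 0 0.

Lemma nsq_ge0 p (v : 'cV[C]_p) : 0 <= nsq v.
Proof. by apply: sumr_ge0 => k _; rewrite addr_ge0 // sqr_ge0. Qed.

Lemma vnormE p (v : 'cV[C]_p) : vnorm v = Num.sqrt (nsq v).
Proof. by []. Qed.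

Lemma vnorm_sq p (v : 'cV[C]_p) : vnorm v ^+ 2 = nsq v.
Proof. by rewrite vnormE sqr_sqrtr // nsq_ge0. Qed.

Lemma vnorm_ge0 p (v : 'cV[C]_p) : 0 <= vnorm v.
Proof. exact: sqrtr_ge0. Qed.

Lemma cReD (x y : C) : complex.Re (x + y) = complex.Re x + complex.Re y.
Proof. by case: x; case: y. Qed.
Lemma cImD (x y : C) : complex.Im (x + y) = complex.Im x + complex.Im y.
Proof. by case: x; case: y. Qed.
Lemma cReN (x : C) : complex.Re (- x) = - complex.Re x.
Proof. by case: x. Qed.
Lemma Re_sum I (r : seq I) (P : pred I) (F : I -> C) :
  complex.Re (\sum_(i <- r | P i) F i) = \sum_(i <- r | P i) complex.Re (F i).
Proof. exact: (big_morph _ cReD). Qed.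
Lemma Im_sum I (r : seq I) (P : pred I) (F : I -> C) :
  complex.Im (\sum_(i <- r | P i) F i) = \sum_(i <- r | P i) complex.Im (F i).
Proof. exact: (big_morph _ cImD). Qed.
Lemma cReM (x y : C) : complex.Re (x * y) = complex.Re x * complex.Re y - complex.Im x * complex.Im y.
Proof. by case: x; case: y. Qed.
Lemma cImM (x y : C) : complex.Im (x * y) = complex.Re x * complex.Im y + complex.Im x * complex.Re y.
Proof. by case: x => a b; case: y => c e /=. Qed.

Lemma dotE p (u w : 'cV[C]_p) : dot u w = \sum_k conjc (u k 0) * w k 0.
Proof. by rewrite /dot mxE; apply: eq_bigr => k _; rewrite !mxE. Qed.

Lemma Re_dot p (u w : 'cV[C]_p) : complex.Re (dot u w) =
  \sum_k (complex.Re (u k 0) * complex.Re (w k 0) + complex.Im (u k 0) * complex.Im (w k 0)).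
Proof.
rewrite dotE Re_sum; apply: eq_bigr => k _.
by case: (u k 0) => a b; case: (w k 0) => c e /=; ring.
Qed.

Lemma Im_dotvv p (v : 'cV[C]_p) : complex.Im (dot v v) = 0.
Proof.
rewrite dotE Im_sum big1 // => k _.
by case: (v k 0) => a b /=; ring.
Qed.

Lemma Re_dotvv p (v : 'cV[C]_p) : complex.Re (dot v v) = nsq v.
Proof. by rewrite Re_dot; apply: eq_bigr => k _; rewrite !expr2. Qed.

Lemma dotvv p (v : 'cV[C]_p) : dot v v = Complex (nsq v) 0.
Proof.
by rewrite -Re_dotvv -(Im_dotvv v); case: (dot v v).
Qed.

End S.

Section S.
Variable R : realType.
Local Notation C := (R[i]).

Lemma adjmxM p q r (A : 'M[C]_(p, q)) (B : 'M[C]_(q, r)) :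
  adjmx (A *m B) = adjmx B *m adjmx A.
Proof. by rewrite /adjmx map_mxM trmx_mul. Qed.
Lemma adjmxD p q (A B : 'M[C]_(p, q)) : adjmx (A + B) = adjmx A + adjmx B.
Proof. by apply/matrixP => i j; rewrite !mxE rmorphD. Qed.
Lemma adjmxN p q (A : 'M[C]_(p, q)) : adjmx (- A) = - adjmx A.
Proof. by apply/matrixP => i j; rewrite !mxE rmorphN. Qed.
Lemma adjmxB p q (A B : 'M[C]_(p, q)) : adjmx (A - B) = adjmx A - adjmx B.
Proof. by rewrite adjmxD adjmxN. Qed.
Lemma adjmx_sum p q I (r : seq I) (P : pred I) (F : I -> 'M[C]_(p, q)) :
  adjmx (\sum_(i <- r | P i) F i) = \sum_(i <- r | P i) adjmx (F i).
Proof. have h0 : adjmx (0 : 'M[C]_(p, q)) = 0 by apply/matrixP => i j; rewrite !mxE rmorph0.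
exact: (big_morph (@adjmx R p q) (@adjmxD p q) h0). Qed.
Lemma adjmxK p q (A : 'M[C]_(p, q)) : adjmx (adjmx A) = A.
Proof. by apply/matrixP => i j; rewrite !mxE conjcK. Qed.
Lemma adjmx_scalar p (a : C) : adjmx (a%:M : 'M_p) = (conjc a)%:M.
Proof. by apply/matrixP => i j; rewrite !mxE eq_sym; case: eqP => _; rewrite ?mulr1n ?mulr0n ?conjc0. Qed.
Lemma adjmx_tens p q r s (A : 'M[C]_(p, q)) (B : 'M[C]_(r, s)) :
  adjmx (A *t B) = adjmx A *t adjmx B.
Proof. by apply/matrixP => i j; rewrite !mxE rmorphM. Qed.

Lemma tensmxDl p q r s (A1 A2 : 'M[C]_(p, q)) (B : 'M[C]_(r, s)) :
  (A1 + A2) *t B = A1 *t B + A2 *t B.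
Proof. by apply/matrixP => i j; rewrite !mxE mulrDl. Qed.
Lemma tensmxNl p q r s (A : 'M[C]_(p, q)) (B : 'M[C]_(r, s)) :
  (- A) *t B = - (A *t B).
Proof. by apply/matrixP => i j; rewrite !mxE mulNr. Qed.
Lemma tensmxBl p q r s (A1 A2 : 'M[C]_(p, q)) (B : 'M[C]_(r, s)) :
  (A1 - A2) *t B = A1 *t B - A2 *t B.
Proof. by rewrite tensmxDl tensmxNl. Qed.
Lemma tensmxNr p q r s (A : 'M[C]_(p, q)) (B : 'M[C]_(r, s)) :
  A *t (- B) = - (A *t B).
Proof. by apply/matrixP => i j; rewrite !mxE mulrN. Qed.

Lemma dot_adj p q (M : 'M[C]_(p, q)) (u : 'cV[C]_p) (w : 'cV[C]_q) :
  dot u (M *m w) = dot (adjmx M *m u) w.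
Proof. by rewrite /dot adjmxM adjmxK mulmxA. Qed.

Lemma dot_tens p q (a c : 'cV[C]_p) (b e : 'cV[C]_q) :
  dot (a *t b : 'cV_(p * q)) (c *t e : 'cV_(p * q)) = dot a c * dot b e.
Proof.
rewrite /dot.
have -> : (adjmx (a *t b) : 'M_(1, p * q)) = adjmx a *t adjmx b := adjmx_tens a b.
rewrite (tensmx_mul (adjmx a) (adjmx b) c e).
rewrite mxE /=.
by rewrite !(ord1 (Ordinal _)).
Qed.

End S.

Section S.
Variable R : realType.
Local Notation C := (R[i]).

Lemma Re_dotC p (u w : 'cV[C]_p) : complex.Re (dot u w) = complex.Re (dot w u).
Proof. by rewrite !Re_dot; apply: eq_bigr => k _; ring. Qed.

Lemma nsq0_Re_dot p (u w : 'cV[C]_p) : nsq u = 0 -> complex.Re (dot u w) = 0.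
Proof.
move=> h; rewrite Re_dot big1 // => k _.
have hk : complex.Re (u k 0) ^+ 2 + complex.Im (u k 0) ^+ 2 = 0.
  by apply: (psumr_eq0P _ h) => // i _; rewrite addr_ge0 // sqr_ge0.
have h1 : complex.Re (u k 0) = 0 by nra.
have h2 : complex.Im (u k 0) = 0 by nra.
by rewrite h1 h2; ring.
Qed.

Lemma CS p (u w : 'cV[C]_p) : complex.Re (dot u w) <= vnorm u * vnorm w.
Proof.
set s := vnorm u; set t := vnorm w.
have hs : nsq u = s ^+ 2 by rewrite vnorm_sq.
have ht : nsq w = t ^+ 2 by rewrite vnorm_sq.
have s0 : 0 <= s := vnorm_ge0 u.
have t0 : 0 <= t := vnorm_ge0 w.
have E : \sum_k ((t * complex.Re (u k 0) - s * complex.Re (w k 0)) ^+ 2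
               + (t * complex.Im (u k 0) - s * complex.Im (w k 0)) ^+ 2)
   = t ^+ 2 * nsq u - 2 * s * t * complex.Re (dot u w) + s ^+ 2 * nsq w.
  rewrite Re_dot /nsq !mulr_sumr -sumrB -big_split /=.
  by apply: eq_bigr => k _; ring.
have P0 : 0 <= t ^+ 2 * nsq u - 2 * s * t * complex.Re (dot u w) + s ^+ 2 * nsq w.
  by rewrite -E; apply: sumr_ge0 => k _; rewrite addr_ge0 // sqr_ge0.
rewrite hs ht in P0.
have [st0|st0] := eqVneq (s * t) 0.
  move/eqP: st0; rewrite mulf_eq0 => /orP [/eqP hs0|/eqP ht0].
    by rewrite nsq0_Re_dot ?hs ?hs0 ?expr0n //= mul0r.
  by rewrite Re_dotC nsq0_Re_dot ?ht ?ht0 ?expr0n //= mulr0.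
have stp : 0 < s * t by rewrite lt_def st0 mulr_ge0.
nra.
Qed.

Lemma nsq_tens p q (a : 'cV[C]_p) (b : 'cV[C]_q) :
  nsq (a *t b : 'cV_(p * q)) = nsq a * nsq b.
Proof.
by rewrite -Re_dotvv dot_tens !dotvv /=; ring.
Qed.

Lemma vnorm_tens p q (a : 'cV[C]_p) (b : 'cV[C]_q) :
  vnorm (a *t b : 'cV_(p * q)) = vnorm a * vnorm b.
Proof. by rewrite !vnormE nsq_tens sqrtrM // nsq_ge0. Qed.

Lemma dot_mul p (M : 'M[C]_p) (u w : 'cV[C]_p) :
  dot (M *m u) (M *m w) = dot u ((adjmx M *m M) *m w).
Proof. by rewrite /dot adjmxM !mulmxA. Qed.

Lemma nsq_unitary p (M : 'M[C]_p) (v : 'cV[C]_p) :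
  adjmx M *m M = 1%:M -> nsq (M *m v) = nsq v.
Proof. by move=> h; rewrite -!Re_dotvv dot_mul h mul1mx. Qed.

Lemma vnorm_unitary p (M : 'M[C]_p) (v : 'cV[C]_p) :
  adjmx M *m M = 1%:M -> vnorm (M *m v) = vnorm v.
Proof. by move=> h; rewrite !vnormE nsq_unitary. Qed.

Lemma coord_le1 p (v : 'cV[C]_p) (j : 'I_p) : nsq v = 1 ->
  -1 <= complex.Re (v j 0) <= 1 /\ -1 <= complex.Im (v j 0) <= 1.
Proof.
move=> h.
have : complex.Re (v j 0) ^+ 2 + complex.Im (v j 0) ^+ 2 <= 1.
  rewrite -h /nsq (bigD1 j) //= lerDl.
  by apply: sumr_ge0 => k _; rewrite addr_ge0 // sqr_ge0.
move=> hh.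
have h1 : 0 <= complex.Re (v j 0) ^+ 2 := sqr_ge0 _.
have h2 : 0 <= complex.Im (v j 0) ^+ 2 := sqr_ge0 _.
by split; apply/andP; split; nra.
Qed.

Lemma abs_term (a b x y : R) : -1 <= x <= 1 -> -1 <= y <= 1 ->
  `|a * x - b * y| <= `|a| + `|b|.
Proof.
move=> /andP[hx1 hx2] /andP[hy1 hy2].
apply: (le_trans (ler_normB _ _)); rewrite !normrM lerD //.
  by rewrite ler_piMr // ler_norml hx1 hx2.
by rewrite ler_piMr // ler_norml hy1 hy2.
Qed.

Lemma abs_term2 (a b x y : R) : -1 <= x <= 1 -> -1 <= y <= 1 ->
  `|a * y + b * x| <= `|a| + `|b|.
Proof.
move=> /andP[hx1 hx2] /andP[hy1 hy2].
apply: (le_trans (ler_normD _ _)); rewrite !normrM lerD //.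
  by rewrite ler_piMr // ler_norml hy1 hy2.
by rewrite ler_piMr // ler_norml hx1 hx2.
Qed.

Definition mxbound p q (M : 'M[C]_(p, q)) : R :=
  \sum_(k < p) 2 * (\sum_(j < q) (`|complex.Re (M k j)| + `|complex.Im (M k j)|)) ^+ 2.

Lemma nsq_mul_bound p q (M : 'M[C]_(p, q)) (v : 'cV[C]_q) :
  nsq v = 1 -> nsq (M *m v) <= mxbound M.
Proof.
move=> hv; rewrite /nsq /mxbound; apply: ler_sum => k _.
set c := \sum_(j < q) _.
have c0 : 0 <= c by apply: sumr_ge0 => j _; rewrite addr_ge0.
have hre : `|complex.Re ((M *m v) k 0)| <= c.
  rewrite mxE Re_sum; apply: (le_trans (ler_norm_sum _ _ _)); apply: ler_sum => j _.
  rewrite cReM; have [h1 h2] := coord_le1 j hv; exact: abs_term.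
have him : `|complex.Im ((M *m v) k 0)| <= c.
  rewrite mxE Im_sum; apply: (le_trans (ler_norm_sum _ _ _)); apply: ler_sum => j _.
  rewrite cImM; have [h1 h2] := coord_le1 j hv; exact: abs_term2.
move: hre him; rewrite !ler_norml => /andP[a1 a2] /andP[b1 b2].
nra.
Qed.

Lemma opnorm_ub p q (M : 'M[C]_(p, q)) (v : 'cV[C]_q) :
  vnorm v = 1 -> vnorm (M *m v) <= opnorm M.
Proof.
move=> hv.
have hv' : nsq v = 1 by rewrite -vnorm_sq hv expr1n.
apply: ub_le_sup; last by exists v.
exists (Num.sqrt (mxbound M)) => r [w [hw ->]].
have hw' : nsq w = 1 by rewrite -vnorm_sq hw expr1n.
rewrite vnormE ler_sqrt; first exact: nsq_mul_bound.
exact: le_trans (nsq_ge0 _) (nsq_mul_bound M hw').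
Qed.

End S.

Section S.
Variable R : realType.
Local Notation C := (R[i]).

Definition J p (v : 'cV[C]_p) (M : 'M[C]_p) : R := complex.Re (dot v (M *m v)).

Lemma JD p (v : 'cV[C]_p) M N : J v (M + N) = J v M + J v N.
Proof. by rewrite /J /dot mulmxDl mulmxDr mxE cReD. Qed.
Lemma JN p (v : 'cV[C]_p) M : J v (- M) = - J v M.
Proof. by rewrite /J /dot mulNmx mulmxN mxE cReN. Qed.
Lemma JB p (v : 'cV[C]_p) M N : J v (M - N) = J v M - J v N.
Proof. by rewrite JD JN. Qed.
Lemma J0 p (v : 'cV[C]_p) : J v 0 = 0.
Proof. by rewrite /J /dot mul0mx mulmx0 mxE. Qed.
Lemma Jsum p (v : 'cV[C]_p) I (r : seq I) (P : pred I) (F : I -> 'M[C]_p) :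
  J v (\sum_(i <- r | P i) F i) = \sum_(i <- r | P i) J v (F i).
Proof. exact: (big_morph _ (JD v) (J0 v)). Qed.

Lemma Jbound p (v : 'cV[C]_p) M : vnorm v = 1 -> J v M <= vnorm (M *m v).
Proof. by move=> h; rewrite /J; apply: le_trans (CS _ _) _; rewrite h mul1r. Qed.

Lemma tens_mulv p q (M : 'M[C]_p) (K : 'M[C]_q) (a : 'cV[C]_p) (b : 'cV[C]_q) :
  ((M *t K) *m (a *t b : 'cV_(p * q)) : 'cV_(p * q)) = (M *m a) *t (K *m b).
Proof. exact: (tensmx_mul M K a b). Qed.

Lemma J_tens p q (M : 'M[C]_p) (K : 'M[C]_q) (a : 'cV[C]_p) (b : 'cV[C]_q) :
  J (a *t b : 'cV_(p * q)) (M *t K) = complex.Re (dot a (M *m a) * dot b (K *m b)).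
Proof. by rewrite /J tens_mulv dot_tens. Qed.

Lemma J_tens_sq p q (M : 'M[C]_p) (K : 'M[C]_q) (a : 'cV[C]_p) (b : 'cV[C]_q) :
  J (a *t b : 'cV_(p * q)) ((adjmx M *m M) *t (adjmx K *m K)) = nsq (M *m a) * nsq (K *m b).
Proof. by rewrite J_tens -!dot_mul !dotvv /=; ring. Qed.

Lemma J_tens_bound p q (M : 'M[C]_p) (K : 'M[C]_q) (a : 'cV[C]_p) (b : 'cV[C]_q) :
  vnorm a = 1 -> vnorm b = 1 -> adjmx K *m K = 1%:M ->
  J (a *t b : 'cV_(p * q)) (M *t K) <= opnorm M.
Proof.
move=> ha hb hK.
apply: le_trans (Jbound _ _) _; first by rewrite vnorm_tens ha hb mulr1.
rewrite tens_mulv vnorm_tens (vnorm_unitary _ hK) hb mulr1.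
exact: opnorm_ub.
Qed.

Lemma opnorm_ge0 p q (hq : (0 < q)%N) (M : 'M[C]_(p, q)) : 0 <= opnorm M.
Proof.
pose e : 'cV[C]_q := delta_mx (Ordinal hq) 0.
have he : vnorm e = 1.
  rewrite vnormE /nsq (bigD1 (Ordinal hq)) //= big1 ?addr0 ?mxE /= ?expr1n ?expr0n ?addr0 ?sqrtr1 //.
  move=> k /negbTE hk; rewrite !mxE hk /= expr0n /= addr0 //.
exact: le_trans (vnorm_ge0 (M *m e)) (opnorm_ub M he).
Qed.

End S.

Section S.
Variable R : realType.
Local Notation C := (R[i]).

Lemma adjmx_block p1 p2 q1 q2 (a : 'M[C]_(p1, q1)) (b : 'M[C]_(p1, q2))
  (c : 'M[C]_(p2, q1)) (e : 'M[C]_(p2, q2)) :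
  adjmx (block_mx a b c e) = block_mx (adjmx a) (adjmx c) (adjmx b) (adjmx e).
Proof. by rewrite /adjmx map_block_mx tr_block_mx. Qed.

Lemma adjmx0 p q : adjmx (0 : 'M[C]_(p, q)) = 0.
Proof. by apply/matrixP => i j; rewrite !mxE rmorph0. Qed.
Lemma adjmx1 p : adjmx (1%:M : 'M[C]_p) = 1%:M.
Proof. by rewrite adjmx_scalar rmorph1. Qed.

Lemma adjP m : adjmx (Pproj R m) = Pproj R m.
Proof. by rewrite /Pproj adjmx_block !adjmx0 adjmx1. Qed.
Lemma adjQ m : adjmx (Qproj R m) = Qproj R m.
Proof. by rewrite /Qproj adjmx_block !adjmx0 adjmx1. Qed.
Lemma PP m : Pproj R m *m Pproj R m = Pproj R m.
Proof. by rewrite /Pproj mulmx_block !mulmx0 !mul0mx !addr0 mulmx1. Qed.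
Lemma QQ m : Qproj R m *m Qproj R m = Qproj R m.
Proof. by rewrite /Qproj mulmx_block !mulmx0 !mul0mx !addr0 !add0r mulmx1. Qed.
Lemma PQ m : Pproj R m *m Qproj R m = 0.
Proof. by rewrite /Pproj /Qproj mulmx_block !mulmx0 !mul0mx !addr0 block_mx0. Qed.
Lemma QP m : Qproj R m *m Pproj R m = 0.
Proof. by rewrite /Pproj /Qproj mulmx_block !mulmx0 !mul0mx !addr0 block_mx0. Qed.

Lemma nsq_col p1 p2 (x : 'cV[C]_p1) (y : 'cV[C]_p2) :
  nsq (col_mx x y) = nsq x + nsq y.
Proof. by rewrite /nsq big_split_ord /=; congr (_ + _); apply: eq_bigr => k _;
  rewrite ?col_mxEu ?col_mxEd. Qed.

Lemma nsq0 p : nsq (0 : 'cV[C]_p) = 0.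
Proof. by rewrite /nsq big1 // => k _; rewrite mxE /= expr0n /= addr0. Qed.

Lemma P_col m (x y : 'cV[C]_m) : Pproj R m *m col_mx x y = col_mx x 0.
Proof. by rewrite /Pproj mul_block_col !mul0mx mul1mx !addr0. Qed.
Lemma Q_col m (x y : 'cV[C]_m) : Qproj R m *m col_mx x y = col_mx 0 y.
Proof. by rewrite /Qproj mul_block_col !mul0mx mul1mx !addr0 add0r. Qed.

Definition hvec m (hm : (0 < m)%N) : 'cV[C]_m :=
  (Complex (Num.sqrt (2^-1)) 0) *: delta_mx (Ordinal hm) 0.

Lemma nsq_hvec m (hm : (0 < m)%N) : nsq (hvec hm) = 2^-1.
Proof.
rewrite /nsq (bigD1 (Ordinal hm)) //= big1 ?addr0.
  rewrite !mxE eqxx /= !mulr0 !mul0r mulr1 subr0 addr0 expr0n /= addr0 sqr_sqrtr //.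
  by rewrite invr_ge0 ler0n.
move=> k /negbTE hk; rewrite !mxE hk /= !mulr0 ?subr0 ?addr0 expr0n /= ?addr0 //.
Qed.

Definition phiv m (hm : (0 < m)%N) : 'cV[C]_(m + m) := col_mx (hvec hm) (hvec hm).

Lemma nsq_phiv m hm : nsq (@phiv m hm) = 1.
Proof. by rewrite /phiv nsq_col nsq_hvec; field. Qed.
Lemma vnorm_phiv m hm : vnorm (@phiv m hm) = 1.
Proof. by rewrite vnormE nsq_phiv sqrtr1. Qed.
Lemma nsq_Pphiv m hm : nsq (Pproj R m *m @phiv m hm) = 2^-1.
Proof. by rewrite P_col nsq_col nsq0 addr0 nsq_hvec. Qed.
Lemma nsq_Qphiv m hm : nsq (Qproj R m *m @phiv m hm) = 2^-1.
Proof. by rewrite Q_col nsq_col nsq0 add0r nsq_hvec. Qed.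

End S.

Unset Implicit Arguments. Set Strict Implicit.

Lemma zmod5 (V : zmodType) (p q r s t : V) : (p - q) - (r - s) - ((t - r) - (q - s)) = p - t.
Proof.
rewrite [- (_ - (q - s))]opprB addrACA.
rewrite [p - q + _]addrA subrK [- (r - s)]opprB [- (t - r)]opprB.
by rewrite [s - r + _]addrA subrK addrA subrK.
Qed.

Lemma comm_shift (R : realType) n (A B : 'M[R[i]]_n) (a b : R[i]) :
  (A - a%:M) *m (B - b%:M) - (B - b%:M) *m (A - a%:M) = A *m B - B *m A.
Proof.
rewrite !mulmxBl !mulmxBr (scalar_mxC b A) (scalar_mxC a B) -!scalar_mxM mulrC.
exact: zmod5.
Qed.

Lemma arith8 (R : realType) (a1 S a2 a3 a4 a5 y y' : R) :
  a1 + S + a2 - a3 + (a4 + y - 0) + (- a5 - 0 - - y') =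
  a1 + S + (a2 + a4 - (a3 + a5)) + y + y'.
Proof. ring. Qed.

Lemma J_F {R : realType} {p : nat} (v : 'cV[R[i]]_p) {d : nat} (g h : 'I_d -> 'M[R[i]]_p) :
  J v (\sum_i (g i + adjmx (g i)) - \sum_i (h i + adjmx (h i))) =
  \sum_i J v (g i) + \sum_i J v (adjmx (g i)) - (\sum_i J v (h i) + \sum_i J v (adjmx (h i))).
Proof. by rewrite JB !Jsum -!big_split; congr (_ - _); apply: eq_bigr => i _; rewrite JD. Qed.

Lemma sqrt2_le2 {R : realType} : Num.sqrt (2 : R) <= 2.
Proof.
have h := sqr_sqrtr (ler0n R 2).
have h0 := sqrtr_ge0 (2 : R).
nra.
Qed.

Lemma final_arith {R : realType} {a1 S JF y y' O oF e1 e2 c : R} :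
  2 * S <= O -> 0 <= O -> JF <= oF -> O + oF <= e2 -> 2 * a1 + y + y' <= e1 ->
  2^-1 * e1 <= c * e1 -> a1 + S + JF + y / 2 + y' / 2 <= c * e1 + e2.
Proof. move=> *; lra. Qed.

Theorem mainTheorem3 (R : realType) (n d m : nat)
  (Hn : (0 < n)%N) (Hd : (0 < d)%N) (Hm : (0 < m)%N)
  (G : 'I_d -> 'M[R[i]]_(m + m)) (HG : clifford_rep G)
  (A : 'I_d -> 'M[R[i]]_n) (HA : forall i, is_hermitian (A i))
  (B : 'M[R[i]]_n) (lam : 'I_d -> R) (nu : R[i])
  (eps1 eps2 : R) (He1 : 0 <= eps1) (He2 : 0 <= eps2)
  (psi : 'cV[R[i]]_n) (Hpsi : vnorm psi = 1)
  (H1 : 2 * (\sum_(i < d) vnorm (A i *m psi - RtoC (lam i) *: psi) ^+ 2)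
        + vnorm (B *m psi - nu *: psi) ^+ 2
        + vnorm (adjmx B *m psi - conjc nu *: psi) ^+ 2 <= eps1)
  (H2 : \sum_(i < d) \sum_(k < d | k != i)
          opnorm (A i *m A k - A k *m A i)
        + opnorm (Fmx G A B lam nu) <= eps2) :
  clifford_pseudospectrum G A B
    (Num.sqrt ((Num.sqrt 2)^-1 * eps1 + eps2)) (lam, nu).
Proof.
rewrite /clifford_pseudospectrum /clifford_gap /=.
have [hGh [hG2 hGa]] := HG.
pose X i := A i - (RtoC (lam i))%:M.
pose Y := B - nu%:M.
pose P := Pproj R m.
pose Q := Qproj R m.
pose T i := X i *t G i.
have hX : forall i, adjmx (X i) = X i.
  move=> i; rewrite /X adjmxB adjmx_scalar (HA i); congr (_ - _%:M).
  by rewrite /RtoC /= oppr0.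
have hGu : forall i, adjmx (G i) *m G i = 1%:M by move=> i; rewrite hGh.
pose phi := @phiv R m Hm.
pose v := (psi *t phi : 'cV_(n * (m + m))).
have hv : vnorm v = 1 by rewrite /v vnorm_tens Hpsi vnorm_phiv mulr1.
set L := localizer G A B lam nu.
have L_E : L = \sum_i T i + Y *t P - adjmx Y *t Q by [].
have adjL : adjmx L = \sum_i T i + adjmx Y *t P - Y *t Q.
  rewrite L_E adjmxB adjmxD adjmx_sum !adjmx_tens adjmxK /P /Q adjP adjQ.
  congr (_ + _ - _); apply: eq_bigr => i _.
  by rewrite /T adjmx_tens hX hGh.
pose S := \sum_(i < d) \sum_(k < d | k != i) J v (T i *m T k).
have e1 : J v ((\sum_i T i) *m (\sum_i T i)) = \sum_i nsq (X i *m psi) + S.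
  rewrite mulmx_suml Jsum /S -big_split; apply: eq_bigr => i _ /=.
  rewrite mulmx_sumr Jsum (bigD1 i) //=; congr (_ + _).
  have -> : T i *m T i = (adjmx (X i) *m X i) *t (adjmx (G i) *m G i).
    by rewrite /T tensmx_mul hX hGh.
  by rewrite /v J_tens_sq (nsq_unitary _ (hGu i)) /phi nsq_phiv mulr1.
have e2 : J v ((\sum_i T i) *m (Y *t P)) = \sum_i J v ((X i *m Y) *t (G i *m P)).
  by rewrite mulmx_suml Jsum; apply: eq_bigr => i _; rewrite /T tensmx_mul.
have e3 : J v ((\sum_i T i) *m (adjmx Y *t Q)) = \sum_i J v ((X i *m adjmx Y) *t (G i *m Q)).
  by rewrite mulmx_suml Jsum; apply: eq_bigr => i _; rewrite /T tensmx_mul.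
have e4 : J v ((adjmx Y *t P) *m (\sum_i T i)) = \sum_i J v (adjmx ((X i *m Y) *t (G i *m P))).
  rewrite mulmx_sumr Jsum; apply: eq_bigr => i _.
  by rewrite /T tensmx_mul adjmx_tens !adjmxM hX hGh /P adjP.
have e5 : J v ((Y *t Q) *m (\sum_i T i)) = \sum_i J v (adjmx ((X i *m adjmx Y) *t (G i *m Q))).
  rewrite mulmx_sumr Jsum; apply: eq_bigr => i _.
  by rewrite /T tensmx_mul adjmx_tens !adjmxM hX hGh /Q adjQ adjmxK.
have e6 : J v ((adjmx Y *t P) *m (Y *t P)) = nsq (Y *m psi) / 2.
  rewrite tensmx_mul.
  have -> : P *m P = adjmx P *m P by rewrite /P adjP.
  by rewrite /v J_tens_sq /phi /P nsq_Pphiv.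
have e7 : J v ((adjmx Y *t P) *m (adjmx Y *t Q)) = 0.
  by rewrite tensmx_mul /P /Q PQ tensmx0 J0.
have e8 : J v ((Y *t Q) *m (Y *t P)) = 0.
  by rewrite tensmx_mul /P /Q QP tensmx0 J0.
have e9 : J v ((Y *t Q) *m (adjmx Y *t Q)) = nsq (adjmx Y *m psi) / 2.
  rewrite tensmx_mul.
  have -> : Q *m Q = adjmx Q *m Q by rewrite /Q adjQ.
  have -> : Y *m adjmx Y = adjmx (adjmx Y) *m adjmx Y by rewrite adjmxK.
  by rewrite /v J_tens_sq /phi /Q nsq_Qphiv.
have eF : J v (Fmx G A B lam nu) = \sum_i J v ((X i *m Y) *t (G i *m P))
    + \sum_i J v (adjmx ((X i *m Y) *t (G i *m P)))
    - (\sum_i J v ((X i *m adjmx Y) *t (G i *m Q))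
    + \sum_i J v (adjmx ((X i *m adjmx Y) *t (G i *m Q)))).
  exact: (J_F v (fun i => (X i *m Y) *t (G i *m P)) (fun i => (X i *m adjmx Y) *t (G i *m Q))).
have pair : forall i k, k != i ->
    J v (T i *m T k) + J v (T k *m T i) <= opnorm (A i *m A k - A k *m A i).
  move=> i k hki.
  rewrite -JD /T !tensmx_mul (hGa k i hki) tensmxNr -tensmxBl /X comm_shift.
  apply: J_tens_bound => //; first exact: vnorm_phiv.
  by rewrite adjmxM !hGh mulmxA -(mulmxA (G k)) hG2 mulmx1 hG2.
have hS : 2 * S <= \sum_i \sum_(k < d | k != i) opnorm (A i *m A k - A k *m A i).
  have Sw : S = \sum_i \sum_(k < d | k != i) J v (T k *m T i).
    rewrite /S (exchange_big_dep xpredT) //; apply: eq_bigr => i _.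
    by apply: eq_bigl => k; rewrite /= eq_sym.
  have -> : 2 * S = S + S by ring.
  rewrite {2}Sw /S -big_split; apply: ler_sum => i _.
  rewrite -big_split; apply: ler_sum => k hk; exact: pair.
have H1' : 2 * \sum_i nsq (X i *m psi) + nsq (Y *m psi) + nsq (adjmx Y *m psi) <= eps1.
  rewrite (eq_bigr (fun i => nsq (X i *m psi))) in H1; last first.
    by move=> i _; rewrite /X mulmxBl mul_scalar_mx vnorm_sq.
  have hy : B *m psi - nu *: psi = Y *m psi by rewrite /Y mulmxBl mul_scalar_mx.
  have hy' : adjmx B *m psi - conjc nu *: psi = adjmx Y *m psi.
    by rewrite /Y adjmxB adjmx_scalar mulmxBl mul_scalar_mx.
  by rewrite hy hy' !vnorm_sq in H1.
clearbody L S T X Y P Q v.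
have key : nsq (L *m v) = \sum_i nsq (X i *m psi) + S + J v (Fmx G A B lam nu)
    + nsq (Y *m psi) / 2 + nsq (adjmx Y *m psi) / 2.
  rewrite eF -Re_dotvv dot_mul -/(J v _) adjL L_E.
  rewrite !mulmxDl !mulmxDr !mulNmx !mulmxN !JD !JN.
  rewrite e1 e2 e3 e4 e5 e6 e7 e8 e9.
  exact: arith8.
have hF : J v (Fmx G A B lam nu) <= opnorm (Fmx G A B lam nu).
  exact: le_trans (Jbound _ hv) (opnorm_ub _ hv).
have hO : 0 <= \sum_i \sum_(k < d | k != i) opnorm (A i *m A k - A k *m A i).
  by apply: sumr_ge0 => i _; apply: sumr_ge0 => k _; apply: opnorm_ge0.
have hs2 : 2^-1 <= (Num.sqrt 2 : R)^-1.
  have s0 : 0 < Num.sqrt (2 : R) by rewrite sqrtr_gt0 ltr0n.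
  rewrite lef_pV2 ?posrE ?ltr0n //.
  exact: sqrt2_le2.
have hs2' : 2^-1 * eps1 <= (Num.sqrt 2 : R)^-1 * eps1 by apply: ler_wpM2r.
have hnsq : nsq (L *m v) <= (Num.sqrt 2)^-1 * eps1 + eps2.
  rewrite key; exact: (final_arith hS hO hF H2 H1' hs2').
have hlb : has_lbound [set r : R | exists w : 'cV[R[i]]_(n * (m + m)), vnorm w = 1 /\ r = vnorm (L *m w)].
  by exists 0 => r [w [_ ->]]; exact: vnorm_ge0.
apply: le_trans (_ : sigma_min L <= vnorm (L *m v)) _.
  by apply: (ge_inf hlb); exists v.
rewrite vnormE ler_sqrt //.
apply: le_trans hnsq; exact: nsq_ge0.
Qed.
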